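(* Under the Setting, Algorithm and Strong convexity assumption described in the context, if $\{x_k\}_{k\ge1}$ is generated by the inexact CSA algorithm with policy (P2), then $\mathcal B\neq\emptyset$, so that $\bar x_{N,s}=\sum_{k\in\mathcal B}\rho_kx_k/\sum_{k\in\mathcal B}\rho_k$ is well defined.
   Context: Setting. $\mathcal X\subset\mathbb R^n$ is convex and compact; $f:\mathcal X\to\mathbb R$ is convex and $L_f$-Lipschitz; $\Delta\subset\mathbb R^d$ is compact; $g:\mathcal X\times\Delta\to\mathbb R$ is such that for every $\delta\in\Delta$, $x\mapsto g(x,\delta)$ is convex and $L_{g,\mathcal X}$-Lipschitz, and for every $x\in\mathcal X$, $\delta\mapsto g(x,\delta)$ is $L_{g,\Delta}$-Lipschitz. Let $G(x):=\max_{\delta\in\Delta}g(x,\delta)$ and assume the problem $\min_{x\in\mathcal X}\{f(x):G(x)\le0\}$ has an optimal solution $x^*$. Norms are Euclidean. $f'(x)$ denotes a subgradient of $f$ at $x$ and $g'(x,\delta)$ a subgradient of $g(\cdot,\delta)$ at $x$. Let $\omega_{\mathcal X}:\mathcal X\to\mathbb R$ be continuously differentiable and $1$-strongly convex; $V(x,z):=\omega_{\mathcal X}(z)-\omega_{\mathcal X}(x)-\langle\nabla\omega_{\mathcal X}(x),z-x\rangle$; prox-mapping $P_{x,\mathcal X}(y):=\arg\min_{z\in\mathcal X}\{\langle y,z\rangle+V(x,z)\}$; $D_{\mathcal X}:=\sqrt{\max_{x,z\in\mathcal X}V(x,z)}$. Algorithm (inexact CSA). Inputs: $N\ge1$, $x_1\in\mathcal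 X$, tolerances $\eta_k>0$, step-sizes $\gamma_k>0$. For $k=1,\dots,N$: choose some $\delta_k\in\Delta$ (an approximate maximizer of $g(x_k,\cdot)$); set $h_k=f'(x_k)$ if $g(x_k,\delta_k)\le\eta_k$ and $h_k=g'(x_k,\delta_k)$ otherwise; set $x_{k+1}=P_{x_k,\mathcal X}(\gamma_kh_k)$. For $1\le s\le N$ let $I=\{s,\dots,N\}$, $\mathcal B:=\{k\in I: g(x_k,\delta_k)\le\eta_k\}$, $\mathcal N:=I\setminus\mathcal B$. Strong convexity assumption: $f$ is strongly convex with parameter $\mu_f>0$ (i.e. $f(x)\ge f(z)+\langle f'(z),x-z\rangle+\frac{\mu_f}{2}\|x-z\|^2$), each $g(\cdot,\delta)$ is strongly convex with parameter $\mu_g>0$ uniformly in $\delta$, and there is $L>0$ with $V(x,z)\le\frac L2\|x-z\|^2$ for all $x,z\in\mathcal X$. Define $a_k=\mu_f\gamma_k/L$ if $g(x_k,\delta_k)\le\eta_k$ and $a_k=\mu_g\gamma_k/L$ otherwise; $A_1=1$, $A_k=(1-a_k)A_{k-1}$ for $k\ge2$; $\rho_k=\gamma_k/A_k$. Policy (P2): for $k=1,\dots,N$, $\eta_k=\frac{8L}{N}\max\{\mu_f,\mu_g\}\max\{\frac{L_f^2}{\mu_f^2},\frac{L_{g,\mathcal X}^2}{\mu_g^2}\}$, $\gamma_k=\frac{2L}{\mu_f(k+1)}$ if $g(x_k,\delta_k)\le\eta_k$ and $\gamma_k=\frac{2L}{\mu_g(k+1)}$ otherwise, and $s=1$. *)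

(* Defs.v *)
From Stdlib Require Import Reals.
From mathcomp Require Import ssreflect ssrfun ssrbool eqtype ssrnat seq fintype bigop.
Set Implicit Arguments. Unset Strict Implicit.
Local Open Scope R_scope.

Definition vec (n : nat) := 'I_n -> R.
Definition dot {n : nat} (x y : vec n) : R := \big[Rplus/0]_(i < n) (x i * y i).
Definition vadd {n : nat} (x y : vec n) : vec n := fun i => x i + y i.
Definition vsub {n : nat} (x y : vec n) : vec n := fun i => x i - y i.
Definition vscal {n : nat} (a : R) (x : vec n) : vec n := fun i => a * x i.
Definition norm {n : nat} (x : vec n) : R := sqrt (dot x x).
Definition comb {n : nat} (t : R) (x z : vec n) : vec n :=
  vadd (vscal t x) (vscal (1 - t) z).

Definition convex_set {n : nat} (X : vec n -> Prop) : Prop :=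
  forall x z t, X x -> X z -> 0 <= t <= 1 -> X (comb t x z).

(* compactness (sequential compactness, = compactness in the metric space R^n) *)
Definition compact_set {n : nat} (X : vec n -> Prop) : Prop :=
  forall u : nat -> vec n, (forall k, X (u k)) ->
  exists (phi : nat -> nat) (l : vec n),
    (forall k, (phi k < phi (S k))%nat) /\ X l /\
    forall eps, 0 < eps -> exists K : nat, forall k, (K <= k)%nat ->
      norm (vsub (u (phi k)) l) < eps.

Definition convex_on {n : nat} (X : vec n -> Prop) (f : vec n -> R) : Prop :=
  forall x z t, X x -> X z -> 0 <= t <= 1 ->
    f (comb t x z) <= t * f x + (1 - t) * f z.

Definition strongly_convex_on {n : nat} (X : vec n -> Prop) (mu : R)
  (f : vec n -> R) : Prop :=
  forall x z t, X x -> X z -> 0 <= t <= 1 ->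
    f (comb t x z) <= t * f x + (1 - t) * f z
                      - mu / 2 * t * (1 - t) * (norm (vsub x z)) ^ 2.

Definition lipschitz_on {n : nat} (X : vec n -> Prop) (Lc : R)
  (f : vec n -> R) : Prop :=
  forall x z, X x -> X z -> Rabs (f x - f z) <= Lc * norm (vsub x z).

Definition subgradient {n : nat} (X : vec n -> Prop) (f : vec n -> R)
  (x s : vec n) : Prop :=
  forall z, X z -> f x + dot s (vsub z x) <= f z.

Definition gradient_on {n : nat} (X : vec n -> Prop) (f : vec n -> R)
  (df : vec n -> vec n) : Prop :=
  forall x, X x -> forall eps, 0 < eps -> exists del, 0 < del /\
    forall z, X z -> norm (vsub z x) < del ->
      Rabs (f z - f x - dot (df x) (vsub z x)) <= eps * norm (vsub z x).

Definition continuous_vec_on {n m : nat} (X : vec n -> Prop)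
  (F : vec n -> vec m) : Prop :=
  forall x, X x -> forall eps, 0 < eps -> exists del, 0 < del /\
    forall z, X z -> norm (vsub z x) < del -> norm (vsub (F z) (F x)) < eps.

(* Bregman distance V(x,z) and prox-mapping P_{x,X}(y) (as its defining
   argmin property; the argmin is unique by strong convexity of omega) *)
Definition bregman {n : nat} (omega : vec n -> R) (domega : vec n -> vec n)
  (x z : vec n) : R :=
  omega z - omega x - dot (domega x) (vsub z x).

Definition is_prox {n : nat} (X : vec n -> Prop) (omega : vec n -> R)
  (domega : vec n -> vec n) (x y p : vec n) : Prop :=
  X p /\ forall z, X z ->
    dot y p + bregman omega domega x p <= dot y z + bregman omega domega x z.

(* G(x) <= 0, where G(x) = max_{delta in Delta} g(x,delta) *)
Definition G_nonpos {n d : nat} (Delta : vec d -> Prop) (g : vec n -> vec d -> R)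
  (x : vec n) : Prop :=
  forall dl, Delta dl -> g x dl <= 0.

Definition eta_P2 (N : nat) (L muf mug Lf LgX : R) : R :=
  8 * L / INR N * Rmax muf mug * Rmax (Lf ^ 2 / muf ^ 2) (LgX ^ 2 / mug ^ 2).

Definition inB {n d : nat} (g : vec n -> vec d -> R) (x : nat -> vec n)
  (delta : nat -> vec d) (eta : R) (k : nat) : bool :=
  if Rle_dec (g (x k) (delta k)) eta then true else false.

Definition csa_h {n d : nat} (fp : vec n -> vec n) (gp : vec n -> vec d -> vec n)
  (g : vec n -> vec d -> R) (x : nat -> vec n) (delta : nat -> vec d)
  (eta : R) (k : nat) : vec n :=
  if inB g x delta eta k then fp (x k) else gp (x k) (delta k).

Definition gamma_P2 {n d : nat} (L muf mug : R) (g : vec n -> vec d -> R)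
  (x : nat -> vec n) (delta : nat -> vec d) (eta : R) (k : nat) : R :=
  if inB g x delta eta k then 2 * L / (muf * (INR k + 1))
  else 2 * L / (mug * (INR k + 1)).

Definition a_csa {n d : nat} (L muf mug : R) (g : vec n -> vec d -> R)
  (x : nat -> vec n) (delta : nat -> vec d) (eta : R) (k : nat) : R :=
  if inB g x delta eta k then muf * gamma_P2 L muf mug g x delta eta k / L
  else mug * gamma_P2 L muf mug g x delta eta k / L.

Fixpoint A_csa {n d : nat} (L muf mug : R) (g : vec n -> vec d -> R)
  (x : nat -> vec n) (delta : nat -> vec d) (eta : R) (k : nat) : R :=
  match k with
  | O => 1
  | S O => 1
  | S k' => (1 - a_csa L muf mug g x delta eta k) * A_csa L muf mug g x delta eta k'
  end.

Definition rho_csa {n d : nat} (L muf mug : R) (g : vec n -> vec d -> R)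
  (x : nat -> vec n) (delta : nat -> vec d) (eta : R) (k : nat) : R :=
  gamma_P2 L muf mug g x delta eta k / A_csa L muf mug g x delta eta k.

(* Main.v *)
Require Import Defs.
From HB Require Import structures.
From Stdlib Require Import Reals Lra FunctionalExtensionality Classical.
From mathcomp Require Import ssreflect ssrfun ssrbool eqtype ssrnat seq fintype bigop.
Local Open Scope R_scope.

Lemma Rplus_assoc' : associative Rplus. Proof. move=> *; ring. Qed.
HB.instance Definition _ := Monoid.isComLaw.Build R 0 Rplus Rplus_assoc' Rplus_comm Rplus_0_l.

Lemma sumR_add n (F G : 'I_n -> R) :
  \big[Rplus/0]_(i<n) (F i + G i) = \big[Rplus/0]_(i<n) F i + \big[Rplus/0]_(i<n) G i.
Proof. exact: big_split. Qed.

Lemma sumR_scal n a (F : 'I_n -> R) :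
  \big[Rplus/0]_(i<n) (a * F i) = a * \big[Rplus/0]_(i<n) F i.
Proof.
elim: n F => [|n IH] F; first by rewrite !big_ord0 Rmult_0_r.
rewrite !big_ord_recr /= IH. by rewrite Rmult_plus_distr_l.
Qed.

Lemma sumR_ge0 n (F : 'I_n -> R) : (forall i, 0 <= F i) -> 0 <= \big[Rplus/0]_(i<n) F i.
Proof.
elim: n F => [|n IH] F H; first by rewrite big_ord0; lra.
rewrite big_ord_recr /=. have H1 := IH (fun i => F (widen_ord (leqnSn n) i)) (fun i => H _).
have H2 := H ord_max. simpl in H1. lra.
Qed.

Lemma sumR_opp n (F : 'I_n -> R) :
  \big[Rplus/0]_(i<n) (- F i) = - \big[Rplus/0]_(i<n) F i.
Proof.
elim: n F => [|n IH] F; first by rewrite !big_ord0; ring.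
rewrite !big_ord_recr /= IH. set s := bigop.body _ _ _. ring.
Qed.

Lemma dot_subr n (a u v : vec n) : dot a (vsub u v) = dot a u - dot a v.
Proof.
rewrite /dot /vsub /Rminus -sumR_opp -sumR_add. apply: eq_bigr => i _; ring.
Qed.

Lemma dot_subl n (a u v : vec n) : dot (vsub u v) a = dot u a - dot v a.
Proof.
rewrite /dot /vsub /Rminus -sumR_opp -sumR_add. apply: eq_bigr => i _; ring.
Qed.

Lemma dot_addr n (a u v : vec n) : dot a (vadd u v) = dot a u + dot a v.
Proof.
rewrite /dot /vadd -sumR_add. apply: eq_bigr => i _; ring.
Qed.

Lemma dot_addl n (a u v : vec n) : dot (vadd u v) a = dot u a + dot v a.
Proof.
rewrite /dot /vadd -sumR_add. apply: eq_bigr => i _; ring.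
Qed.

Lemma dot_scalr n (a u : vec n) t : dot a (vscal t u) = t * dot a u.
Proof.
rewrite /dot /vscal -sumR_scal. apply: eq_bigr => i _; ring.
Qed.

Lemma dot_scall n (a u : vec n) t : dot (vscal t u) a = t * dot u a.
Proof.
rewrite /dot /vscal -sumR_scal. apply: eq_bigr => i _; ring.
Qed.

Lemma dot_sym n (a u : vec n) : dot a u = dot u a.
Proof. rewrite /dot. apply: eq_bigr => i _; ring. Qed.

Lemma dot_ge0 n (u : vec n) : 0 <= dot u u.
Proof. apply: sumR_ge0 => i. nra. Qed.

Lemma norm_ge0 n (u : vec n) : 0 <= norm u.
Proof. apply: sqrt_pos. Qed.

Lemma norm_sq n (u : vec n) : norm u ^ 2 = dot u u.
Proof. rewrite /norm. rewrite pow2_sqrt //. apply: dot_ge0. Qed.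

Lemma norm_scal n (u : vec n) t : 0 <= t -> norm (vscal t u) = t * norm u.
Proof.
move=> Ht. rewrite /norm dot_scalr dot_scall -Rmult_assoc.
rewrite sqrt_mult; [|nra|apply: dot_ge0]. by rewrite sqrt_square.
Qed.

Lemma comb_sub n t (p x : vec n) : vsub (comb t p x) x = vscal t (vsub p x).
Proof. apply: functional_extensionality => i. rewrite /vsub /comb /vadd /vscal. ring. Qed.

Lemma le_eps a b c : 0 <= c -> (forall eps, 0 < eps -> a <= b + eps * c) -> a <= b.
Proof.
move=> Hc H. apply: Rnot_lt_le => Hab.
have Hc1 : 0 < c + 1 by lra.
have He : 0 < (a - b) / (2 * (c + 1)).
{ apply: Rdiv_lt_0_compat; lra. }
have := H _ He.
have : (a - b) / (2 * (c + 1)) * c <= (a - b) / (2 * (c + 1)) * (c + 1) by nra.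
have -> : (a - b) / (2 * (c + 1)) * (c + 1) = (a - b) / 2 by field; lra.
lra.
Qed.
Arguments dot_subr {n}. Arguments dot_subl {n}. Arguments dot_addr {n}. Arguments dot_addl {n}.
Arguments dot_scalr {n}. Arguments dot_scall {n}. Arguments dot_sym {n}. Arguments dot_ge0 {n}.
Arguments norm_ge0 {n}. Arguments norm_sq {n}. Arguments norm_scal {n}. Arguments comb_sub {n}.

Lemma Rabs_le_inv' a b : Rabs a <= b -> - b <= a <= b.
Proof. move=> H. have := Rle_abs a. have := Rle_abs (- a). rewrite Rabs_Ropp. lra. Qed.

Lemma dirderiv n (X : vec n -> Prop) om dom (x p : vec n) eps t0 :
  convex_set X -> gradient_on X om dom -> X x -> X p -> 0 < eps -> 0 < t0 ->
  exists t, 0 < t /\ t <= 1 /\ t <= t0 /\ X (comb t p x) /\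
   Rabs (om (comb t p x) - om x - t * dot (dom x) (vsub p x)) <= eps * t * norm (vsub p x).
Proof.
move=> Hc Hg Hx Hp He Ht0.
have [del [Hdel H]] := Hg x Hx eps He.
set nn := norm (vsub p x).
have Hnn : 0 <= nn by apply: norm_ge0.
set t := Rmin (Rmin 1 t0) (del / (2 * (nn + 1))).
have Hd : 0 < del / (2 * (nn + 1)) by apply: Rdiv_lt_0_compat; lra.
have Ht : 0 < t.
{ rewrite /t. apply: Rmin_pos => //. apply: Rmin_pos; lra. }
have Ht1 : t <= 1.
{ rewrite /t. apply: Rle_trans (Rmin_l _ _) _. apply: Rmin_l. }
have Ht2 : t <= t0.
{ rewrite /t. apply: Rle_trans (Rmin_l _ _) _. apply: Rmin_r. }
have Ht3 : t <= del / (2 * (nn + 1)) by apply: Rmin_r.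
have HX : X (comb t p x) by apply: Hc => //; lra.
exists t; do 4 (split => //).
have Hn : norm (vsub (comb t p x) x) = t * nn by rewrite comb_sub norm_scal; [|lra].
have Hlt : norm (vsub (comb t p x) x) < del.
{ rewrite Hn.
  have : t * (nn + 1) <= del / (2 * (nn + 1)) * (nn + 1) by apply: Rmult_le_compat_r; lra.
  have -> : del / (2 * (nn + 1)) * (nn + 1) = del / 2 by field; lra.
  nra. }
have := H _ HX Hlt. rewrite Hn comb_sub dot_scalr. lra.
Qed.
Arguments dirderiv {n X om dom x p eps t0}.

Lemma bregman_lb n (X : vec n -> Prop) om dom (x p : vec n) :
  convex_set X -> gradient_on X om dom -> strongly_convex_on X 1 om ->
  X x -> X p -> norm (vsub p x) ^ 2 / 2 <= bregman om dom x p.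
Proof.
move=> Hc Hg Hs Hx Hp.
set nn := norm (vsub p x).
have Hnn : 0 <= nn by apply: norm_ge0.
apply: (@le_eps _ _ (nn ^ 2 / 2 + nn)); first nra.
move=> eps He.
have [t [Ht [Ht1 [Ht2 [HX Hd]]]]] := dirderiv Hc Hg Hx Hp He He.
have Hsc := Hs p x t Hp Hx (conj (Rlt_le _ _ Ht) Ht1).
move: Hd. rewrite -/nn => Hd.
have Ha := Rabs_le_inv' _ _ Hd.
rewrite /bregman.
set D := dot (dom x) (vsub p x).
fold D in Ha.
have Hk : t * (nn ^ 2 / 2 - t * (nn ^ 2 / 2) - eps * nn) <= t * (om p - om x - D).
{ rewrite -/nn in Hsc. nra. }
have Hk2 := Rmult_le_reg_l _ _ _ Ht Hk.
have : t * (nn ^ 2 / 2) <= eps * (nn ^ 2 / 2) by apply: Rmult_le_compat_r; nra.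
nra.
Qed.

Lemma prox_opt n (X : vec n -> Prop) om dom (x y p z : vec n) :
  convex_set X -> gradient_on X om dom -> X p -> X z ->
  is_prox X om dom x y p ->
  dot y (vsub p z) <= bregman om dom x z - bregman om dom p z - bregman om dom x p.
Proof.
move=> Hc Hg Hp Hz [_ Hpr].
set w := vsub z p.
set nn := norm w.
have Hnn : 0 <= nn by apply: norm_ge0.
have Key : 0 <= dot y w + dot (dom p) w - dot (dom x) w.
{ apply: (@le_eps _ _ (nn)) => // eps He.
  have [t [Ht [Ht1 [Ht2 [HX Hd]]]]] := dirderiv Hc Hg Hp Hz He Rlt_0_1.
  set zt := comb t z p in HX Hd.
  have Hd' := Rabs_le_inv' _ _ Hd.
  have H1 := Hpr zt HX.
  have E1 : dot y (vsub zt p) = t * dot y w by rewrite /zt comb_sub dot_scalr.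
  have E1' := dot_subr y zt p.
  have E2 : dot (dom x) (vsub zt p) = t * dot (dom x) w by rewrite /zt comb_sub dot_scalr.
  have E2' := dot_subr (dom x) zt p.
  have E3 := dot_subr (dom x) zt x.
  have E4 := dot_subr (dom x) p x.
  rewrite /bregman in H1.
  rewrite -/w -/nn in Hd'.
  have Hk : t * 0 <= t * (dot y w + dot (dom p) w - dot (dom x) w + eps * nn) by nra.
  have := Rmult_le_reg_l _ _ _ Ht Hk. lra. }
move: Key. rewrite /w /bregman !dot_subr. lra.
Qed.

Lemma step_real L mug c eta K g E Vk Vk1 n2 gam :
  0 < L -> 0 < mug -> 1 <= K -> gam = 2 * L / (mug * (K + 1)) -> 0 <= n2 ->
  gam * E <= Vk - Vk1 + gam ^ 2 * c ^ 2 / 2 -> g - E + mug / 2 * n2 <= 0 ->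
  Vk <= L / 2 * n2 -> eta < g ->
  2 * L * K * eta / mug + K * (K + 1) * Vk1 < (K - 1) * K * Vk + 2 * L ^ 2 * c ^ 2 / mug ^ 2.
Proof.
move=> HL Hm HK Hg Hn H1 H2 H3 H4.
have Hgam : 0 < gam by rewrite Hg; apply: Rdiv_lt_0_compat; nra.
have H5 : mug / L * Vk <= mug / 2 * n2.
{ have -> : mug / 2 * n2 = mug / L * (L / 2 * n2) by field; lra.
  apply: Rmult_le_compat_l => //. apply: Rlt_le; apply: Rdiv_lt_0_compat; lra. }
have H6 : gam * eta < gam * (E - mug / L * Vk) by apply: Rmult_lt_compat_l; lra.
have E1 : gam * (mug / L) = 2 / (K + 1) by rewrite Hg; field; lra.
have H7 : gam * eta < Vk - Vk1 + gam ^ 2 * c ^ 2 / 2 - 2 / (K + 1) * Vk.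
{ rewrite -E1. nra. }
have HKK : 0 < K * (K + 1) by nra.
have H8 := Rmult_lt_compat_l _ _ _ HKK H7.
have E2 : K * (K + 1) * (gam * eta) = 2 * L * K * eta / mug by rewrite Hg; field; lra.
have E3 : K * (K + 1) * (Vk - Vk1 + gam ^ 2 * c ^ 2 / 2 - 2 / (K + 1) * Vk)
  = (K - 1) * K * Vk - K * (K + 1) * Vk1 + 2 * L ^ 2 * c ^ 2 / mug ^ 2 * (K / (K + 1)).
{ rewrite Hg; field; lra. }
have H9 : K / (K + 1) <= 1.
{ apply: (Rmult_le_reg_r (K + 1)); first lra.
  have -> : K / (K + 1) * (K + 1) = K by field; lra. lra. }
have H10 : 0 <= 2 * L ^ 2 * c ^ 2 / mug ^ 2.
{ apply: Rmult_le_pos; last by apply: Rlt_le; apply: Rinv_0_lt_compat; nra.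
  have := pow2_ge_0 c. have := pow2_ge_0 L. nra. }
rewrite E2 E3 in H8. nra.
Qed.
Arguments prox_opt {n X om dom x y p z}.
Arguments bregman_lb {n X om dom x p}.
Arguments step_real {L mug c eta K g E Vk Vk1 n2 gam}.

Lemma INR_ge1 k : (1 <= k)%N -> 1 <= INR k.
Proof. move/leP => H. have := le_INR _ _ H. by rewrite /=. Qed.

Lemma final_real L mug c eta Nr V :
  0 < L -> 0 < mug -> 1 <= Nr -> 0 <= V ->
  8 * L / Nr * mug * (c ^ 2 / mug ^ 2) <= eta ->
  L * eta * Nr * (Nr + 1) / mug + Nr * (Nr + 1) * V < Nr * (2 * L ^ 2 * c ^ 2 / mug ^ 2) -> False.
Proof.
move=> HL Hm HN HV He Hmain.
set A := L * c ^ 2 / mug.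
have HA : 0 <= A.
{ rewrite /A. apply: Rmult_le_pos; last by apply: Rlt_le; apply: Rinv_0_lt_compat.
  have := pow2_ge_0 c. nra. }
have E1 : 8 * L / Nr * mug * (c ^ 2 / mug ^ 2) = 8 * A / Nr by rewrite /A; field; lra.
rewrite E1 in He.
have HeN : 8 * A <= eta * Nr.
{ have -> : 8 * A = 8 * A / Nr * Nr by field; lra.
  apply: Rmult_le_compat_r; lra. }
have HNV : 0 <= Nr * (Nr + 1) * V by apply: Rmult_le_pos => //; nra.
have E2 : Nr * (2 * L ^ 2 * c ^ 2 / mug ^ 2) = (L * Nr / mug) * (2 * A) by rewrite /A; field; lra.
have E3 : L * eta * Nr * (Nr + 1) / mug = (L * Nr / mug) * (eta * (Nr + 1)) by field; lra.
have Hp : 0 < L * Nr / mug by apply: Rdiv_lt_0_compat; nra.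
have H1 : (L * Nr / mug) * (eta * (Nr + 1)) < (L * Nr / mug) * (2 * A) by lra.
have H2 := Rmult_lt_reg_l _ _ _ Hp H1.
have Heta : 0 <= eta by nra.
nra.
Qed.

Arguments final_real {L mug c eta Nr V}.

Lemma A_pos L muf mug n d (g : vec n -> vec d -> R) x delta eta k :
  0 < L -> 0 < muf -> 0 < mug -> 0 < A_csa L muf mug g x delta eta k.
Proof.
move=> HL Hf Hm.
elim: k => [|k IH]; first by simpl; lra.
case: k IH => [|k] IH; first by simpl; lra.
change (0 < (1 - a_csa L muf mug g x delta eta k.+2) * A_csa L muf mug g x delta eta k.+1).
apply: Rmult_lt_0_compat => //.
have HK : 2 <= INR k.+2 by rewrite S_INR; have := INR_ge1 k.+1 isT; lra.
set K := INR k.+2 in HK *.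
have Hq : 2 / (K + 1) * (K + 1) = 2 by field; lra.
rewrite /a_csa /gamma_P2; case: inB.
- have -> : muf * (2 * L / (muf * (K + 1))) / L = 2 / (K + 1) by field; lra.
  nra.
- have -> : mug * (2 * L / (mug * (K + 1))) / L = 2 / (K + 1) by field; lra.
  nra.
Qed.

Lemma sum_pos (P : pred nat) (F : nat -> R) N :
  (forall k, (1 <= k <= N)%N -> 0 < F k) ->
  0 <= \big[Rplus/0]_(1 <= k < N.+1 | P k) F k /\
  ((exists k, (1 <= k <= N)%N /\ P k) -> 0 < \big[Rplus/0]_(1 <= k < N.+1 | P k) F k).
Proof.
elim: N => [|N IH] HF.
- rewrite big_geq //. split; first lra.
  by move=> [k [/andP [H1 H2]]]; have := leq_trans H1 H2.
- have HF' : forall k, (1 <= k <= N)%N -> 0 < F k.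
  { move=> k /andP [h1 h2]. apply: HF. by rewrite h1 (leq_trans h2 (leqnSn N)). }
  have [IH1 IH2] := IH HF'.
  have HFN := HF N.+1 (leqnn _).
  rewrite big_mkcond big_nat_recr //= -big_mkcond.
  set S := \big[Rplus/0]_(1 <= i < N.+1 | P i) F i in IH1 IH2 *.
  have HT : 0 <= (if P N.+1 then F N.+1 else 0) by case: (P N.+1); lra.
  split; first lra.
  move=> [k [/andP [h1 h2] Hk]].
  case: (leqP k N) => hk.
  + have : 0 < S by apply: IH2; exists k; rewrite h1 hk.
    lra.
  + have Ek : k = N.+1 by apply/eqP; rewrite eqn_leq h2 hk.
    rewrite Ek in Hk. rewrite Hk. lra.
Qed.
Theorem mainTheorem4
  (n d : nat) (X : vec n -> Prop) (Delta : vec d -> Prop)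
  (f : vec n -> R) (g : vec n -> vec d -> R)
  (fp : vec n -> vec n) (gp : vec n -> vec d -> vec n)
  (Lf LgX LgD muf mug L : R)
  (omega : vec n -> R) (domega : vec n -> vec n)
  (N : nat) (x : nat -> vec n) (delta : nat -> vec d)
  (* Setting *)
  (HXc : convex_set X) (HXk : compact_set X) (HDk : compact_set Delta)
  (Hfconv : convex_on X f) (Hflip : lipschitz_on X Lf f)
  (Hgconv : forall dl, Delta dl -> convex_on X (fun y => g y dl))
  (HgX : forall dl, Delta dl -> lipschitz_on X LgX (fun y => g y dl))
  (HgD : forall y, X y -> lipschitz_on Delta LgD (fun dl => g y dl))
  (Hopt : exists xs, X xs /\ G_nonpos Delta g xs /\
            forall y, X y -> G_nonpos Delta g y -> f xs <= f y)
  (* subgradient oracles f'(x), g'(x,delta) (norms bounded by the Lipschitz constants) *)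
  (Hfp : forall y, X y -> subgradient X f y (fp y) /\ norm (fp y) <= Lf)
  (Hgp : forall y dl, X y -> Delta dl ->
           subgradient X (fun z => g z dl) y (gp y dl) /\ norm (gp y dl) <= LgX)
  (* distance generating function *)
  (Hgrad : gradient_on X omega domega) (Hdcont : continuous_vec_on X domega)
  (Homega : strongly_convex_on X 1 omega)
  (* Strong convexity assumption *)
  (Hmuf : 0 < muf) (Hmug : 0 < mug) (HL : 0 < L)
  (Hfsc : forall y z, X y -> X z ->
            f z + dot (fp z) (vsub y z) + muf / 2 * (norm (vsub y z)) ^ 2 <= f y)
  (Hgsc : forall dl y z, Delta dl -> X y -> X z ->
            g z dl + dot (gp z dl) (vsub y z) + mug / 2 * (norm (vsub y z)) ^ 2 <= g y dl)
  (HV : forall y z, X y -> X z ->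
          bregman omega domega y z <= L / 2 * (norm (vsub y z)) ^ 2)
  (* inexact CSA with policy (P2), s = 1 *)
  (HN : (1 <= N)%nat)
  (Hx1 : X (x 1%nat))
  (Hdelta : forall k, (1 <= k <= N)%nat -> Delta (delta k))
  (Hstep : forall k, (1 <= k <= N)%nat ->
     is_prox X omega domega (x k)
       (vscal (gamma_P2 L muf mug g x delta (eta_P2 N L muf mug Lf LgX) k)
              (csa_h fp gp g x delta (eta_P2 N L muf mug Lf LgX) k))
       (x (S k))) :
  (exists k, (1 <= k <= N)%nat /\
     g (x k) (delta k) <= eta_P2 N L muf mug Lf LgX) /\
  0 < \big[Rplus/0]_(1 <= k < N.+1 | inB g x delta (eta_P2 N L muf mug Lf LgX) k)
        rho_csa L muf mug g x delta (eta_P2 N L muf mug Lf LgX) k.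
Proof.
set eta := eta_P2 N L muf mug Lf LgX.
have Hpos : forall k, (1 <= k <= N)%N ->
    0 < rho_csa L muf mug g x delta eta k.
{ move=> k Hk. rewrite /rho_csa. apply: Rdiv_lt_0_compat; last exact: A_pos.
  have := pos_INR k => Hk0.
  rewrite /gamma_P2; case: inB; apply: Rdiv_lt_0_compat; nra. }
suff Hex : exists k, (1 <= k <= N)%N /\ g (x k) (delta k) <= eta.
{ split => //. have [_ H] := sum_pos (inB g x delta eta) _ N Hpos.
  apply: H. move: Hex => [k [Hk Hg]]. exists k; split => //.
  by rewrite /inB; case: Rle_dec. }
apply: NNPP => Hnot.
have Hlt : forall k, (1 <= k <= N)%N -> eta < g (x k) (delta k).
{ move=> k Hk. apply: Rnot_le_lt => H. apply: Hnot. by exists k. }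
have [xs [Hxs [HGxs _]]] := Hopt.
have HXkk : forall k, (1 <= k <= N.+1)%N -> X (x k).
{ elim=> [|k IH] // /andP [h1 h2].
  case: k IH h1 h2 => [|k] IH h1 h2; first exact: Hx1.
  have [Hp _] := Hstep k.+1 (ltac:(by rewrite /= -ltnS h2)).
  exact: Hp. }
set V := fun k => bregman omega domega (x k) xs.
set c := LgX.
set C := 2 * L ^ 2 * c ^ 2 / mug ^ 2.
have Hstep' : forall k, (1 <= k <= N)%N ->
  2 * L * INR k * eta / mug + INR k * (INR k + 1) * V k.+1 <
  (INR k - 1) * INR k * V k + C.
{ move=> k Hk.
  have HK := INR_ge1 k (proj1 (andP Hk)).
  have HnB : inB g x delta eta k = false.
  { rewrite /inB; case: Rle_dec => // H. have := Hlt k Hk. lra. }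
  have Hgam : gamma_P2 L muf mug g x delta eta k = 2 * L / (mug * (INR k + 1))
    by rewrite /gamma_P2 HnB.
  have Hh : csa_h fp gp g x delta eta k = gp (x k) (delta k) by rewrite /csa_h HnB.
  have Hpr := Hstep k Hk. rewrite Hgam Hh -/eta in Hpr.
  set gam := 2 * L / (mug * (INR k + 1)) in Hpr.
  set h := gp (x k) (delta k) in Hpr.
  have Hxk : X (x k) by apply: HXkk; move: Hk => /andP [h1 h2]; rewrite h1 (leq_trans h2 (leqnSn N)).
  have Hxk1 : X (x k.+1) by apply: HXkk; move: Hk => /andP [h1 h2]; rewrite /= -ltnS in h2; rewrite h2.
  have Hdk := Hdelta k Hk.
  have Hopt1 := prox_opt HXc Hgrad Hxk1 Hxs Hpr.
  have Hlb := bregman_lb HXc Hgrad Homega Hxk Hxk1.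
  have [_ Hhn] := Hgp (x k) (delta k) Hxk Hdk.
  fold h in Hhn.
  have Hsc := Hgsc (delta k) xs (x k) Hdk Hxs Hxk.
  fold h in Hsc.
  have HVb := HV (x k) xs Hxk Hxs.
  have Hgxs := HGxs (delta k) Hdk.
  set u := vsub (x k.+1) (x k).
  have Hsq0 : forall w : vec n, 0 <= gam * (gam * dot h h) + 2 * gam * dot h w + dot w w.
  { move=> w. have := dot_ge0 (vadd (vscal gam h) w).
    rewrite !dot_addl !dot_addr !dot_scall !dot_scalr (dot_sym w h). lra. }
  have Hsq := Hsq0 u.
  rewrite -!norm_sq in Hsq. rewrite -/u in Hlb.
  rewrite /u dot_subr in Hsq.
  rewrite dot_scall !dot_subr in Hopt1.
  rewrite !dot_subr in Hsc.
  have Hn0 := norm_ge0 h.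
  have Hhh : norm h ^ 2 <= c ^ 2 by rewrite /c; nra.
  have Hgam0 : 0 < gam by rewrite /gam; apply: Rdiv_lt_0_compat; nra.
  have Hgg : gam ^ 2 * norm h ^ 2 <= gam ^ 2 * c ^ 2 by apply: Rmult_le_compat_l => //; nra.
  have Hsym : norm (vsub (x k) xs) ^ 2 = norm (vsub xs (x k)) ^ 2.
  { rewrite !norm_sq !dot_subl !dot_subr (dot_sym xs (x k)). ring. }
  rewrite Hsym in HVb.
  apply: (step_real (E := dot h (x k) - dot h xs) (n2 := norm (vsub xs (x k)) ^ 2)
           (gam := gam) (g := g (x k) (delta k))) => //.
  - by apply: pow2_ge_0.
  - rewrite /V.
    have E1 : gam * (dot h (x k) - dot h xs) = gam * (dot h (x k.+1) - dot h xs) - gam * (dot h (x k.+1) - dot h (x k)) by ring.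
    have E2 : gam * (gam * norm h ^ 2) = gam ^ 2 * norm h ^ 2 by ring.
    have E3 : 2 * gam * (dot h (x k.+1) - dot h (x k)) = 2 * (gam * (dot h (x k.+1) - dot h (x k))) by ring.
    rewrite E1. rewrite E2 E3 -/u in Hsq. lra.
  - lra.
  - exact: Hlt k Hk. }
have HQ : forall m, (m <= N)%N ->
  L * eta * INR m * (INR m + 1) / mug + INR m * (INR m + 1) * V m.+1 <= INR m * C.
{ elim=> [|m IH] Hm.
  - rewrite /=. lra.
  - have IH' := IH (ltnW Hm).
    have Hs := Hstep' m.+1 (ltac:(by rewrite /= Hm)).
    rewrite S_INR in Hs *. lra. }
have HN' : exists N', N = N'.+1 by case: N HN {Hpos Hstep Hdelta HQ Hstep' Hlt HXkk Hnot eta} => [|N'] //; exists N'.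
have [N' EN] := HN'.
have HQ' := HQ N' (ltac:(by rewrite EN)).
have Hs := Hstep' N (ltac:(by rewrite HN leqnn)).
have HXN : X (x N.+1) by apply: HXkk; rewrite /= leqnn.
have HVN := bregman_lb HXc Hgrad Homega HXN Hxs.
have HV0 : 0 <= V N.+1 by rewrite /V; have := pow2_ge_0 (norm (vsub xs (x N.+1))); lra.
have HNr := INR_ge1 N HN.
have Heta : 8 * L / INR N * mug * (c ^ 2 / mug ^ 2) <= eta.
{ rewrite /eta /eta_P2 -/c.
  have H1 : mug <= Rmax muf mug by apply: Rmax_r.
  have H2 : c ^ 2 / mug ^ 2 <= Rmax (Lf ^ 2 / muf ^ 2) (c ^ 2 / mug ^ 2) by apply: Rmax_r.
  have H3 : 0 <= c ^ 2 / mug ^ 2.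
  { apply: Rmult_le_pos; first by apply: pow2_ge_0.
    apply: Rlt_le; apply: Rinv_0_lt_compat; nra. }
  have H4 : 0 < 8 * L / INR N by apply: Rdiv_lt_0_compat; lra.
  apply: Rmult_le_compat; try nra. }
apply: (final_real HL Hmug HNr HV0 Heta).
move: Hs. rewrite EN. rewrite S_INR. move=> Hs. rewrite /C in HQ' Hs. lra.
Qed.
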